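(* Let $F=G/H=G^{\mathbb C}/P$ be a (pseudo-Riemannian) flag manifold and let $J,J'$ be two $G$-invariant complex structures on $F$. Then all Koszul numbers of $J$ are even if and only if all Koszul numbers of $J'$ are even; i.e. divisibility by two of the Koszul numbers does not depend on the invariant complex structure.
   Context: $G$ is a compact connected simply-connected semisimple Lie group, $H$ the centralizer of a torus. Invariant complex structures on $F$ correspond to systems of simple roots $\Pi=\Pi_W\sqcup\Pi_B$ of $\mathfrak g^{\mathbb C}$ with $\Pi_W$ a system of simple roots of the root system $R_H$ of $\mathfrak h^{\mathbb C}$, $\Pi_B=\{\beta_1,\dots,\beta_v\}$. The Koszul form is $\sigma^J=\sum_{\alpha\in R^+\setminus R_H}\alpha=\sum_j k_j\Lambda_j$ with $\Lambda_j$ the fundamental weight of $\beta_j$; the $k_j$ are the Koszul numbers of $J$. *)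

(* Defs.v *)
From mathcomp Require Import all_boot all_order all_algebra.
From mathcomp Require Import boolp reals.
Set Implicit Arguments. Unset Strict Implicit. Unset Printing Implicit Defensive.
Import Order.TTheory GRing.Theory Num.Theory.
Local Open Scope ring_scope.

Section RootSystems.
Variables (R : realType) (n : nat).
Implicit Types (u v a b : 'rV[R]_n) (rs S P ts : seq 'rV[R]_n).

(* standard Euclidean inner product on R^n (= h_R^* with the Killing-form
   inner product, after choosing an orthonormal basis) *)
Definition dot u v : R := (u *m v^T) 0 0.

Definition is_intR (x : R) : Prop := exists z : int, x = z%:~R.
Definition is_evenR (x : R) : Prop := exists z : int, x = 2 * z%:~R.

Definition cartan b a : R := 2 * dot b a / dot a a.
Definition refl a b : 'rV[R]_n := b - cartan b a *: a.

(* rs is a reduced crystallographic root system (the root system of a complex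
   semisimple Lie algebra), spanning the whole space (semisimplicity). *)
Definition root_system rs : Prop :=
  [/\ uniq rs /\ 0 \notin rs,
      (forall v : 'rV[R]_n, exists c : 'I_(size rs) -> R,
          v = \sum_(i < size rs) c i *: rs`_i),
      (forall a b, a \in rs -> b \in rs -> refl a b \in rs),
      (forall a b, a \in rs -> b \in rs -> is_intR (cartan b a)) &
      (forall a (c : R), a \in rs -> c *: a \in rs -> c = 1 \/ c = -1)].

Definition nonneg_comb P a : Prop :=
  exists c : 'I_(size P) -> nat, a = \sum_(i < size P) (c i)%:R *: P`_i.

Definition is_base P S : Prop :=
  [/\ {subset P <= S}, free P &
      forall a, a \in S -> nonneg_comb P a \/ nonneg_comb P (- a)].

(* roots of the centralizer H of the torus with Lie algebra spanned by ts:
   the roots vanishing on that torus *)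
Definition rootsH rs ts : seq 'rV[R]_n :=
  [seq a <- rs | all (fun t => dot a t == 0) ts].

(* invariant complex structures <-> bases Pi = Pi_W u Pi_B of R with
   Pi_W = Pi \cap R_H a base of R_H *)
Definition inv_cx_structure rs ts P : Prop :=
  is_base P rs /\ is_base [seq a <- P | a \in rootsH rs ts] (rootsH rs ts).

Definition koszul_form rs ts P : 'rV[R]_n :=
  \sum_(a <- rs | `[< nonneg_comb P a >] && (a \notin rootsH rs ts)) a.

(* Koszul number k_j = coefficient of the fundamental weight Lambda_j of
   beta_j in sigma^J, i.e. <sigma^J, beta_j^vee> *)
Definition koszul_number rs ts P b : R := cartan (koszul_form rs ts P) b.

Definition all_koszul_even rs ts P : Prop :=
  forall b, b \in P -> b \notin rootsH rs ts -> is_evenR (koszul_number rs ts P b).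

End RootSystems.

(* Main.v *)
Require Import Defs.
From mathcomp Require Import all_boot all_order all_algebra.
From mathcomp Require Import boolp reals.
From mathcomp Require Import ring lra zify.
Set Implicit Arguments. Unset Strict Implicit. Unset Printing Implicit Defensive.
Import Order.TTheory GRing.Theory Num.Theory.
Local Open Scope ring_scope.

Section Aux.
Variables (R : realType) (n : nat).
Implicit Types (u v w a b : 'rV[R]_n) (rs P : seq 'rV[R]_n).

Lemma dotE u v : dot u v = \sum_j u 0 j * v 0 j.
Proof. by rewrite /dot !mxE; apply: eq_bigr => j _; rewrite mxE. Qed.

Lemma dotC u v : dot u v = dot v u.
Proof. by rewrite !dotE; apply: eq_bigr => j _; rewrite mulrC. Qed.

Lemma dotDl u v w : dot (u + w) v = dot u v + dot w v.
Proof. by rewrite /dot mulmxDl mxE. Qed.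

Lemma dotZl (c : R) u v : dot (c *: u) v = c * dot u v.
Proof. by rewrite /dot -scalemxAl mxE. Qed.

Lemma dot0l v : dot 0 v = 0.
Proof. by rewrite /dot mul0mx mxE. Qed.

Lemma dotNl u v : dot (- u) v = - dot u v.
Proof. by rewrite -scaleN1r dotZl mulN1r. Qed.

Lemma dotBl u v w : dot (u - w) v = dot u v - dot w v.
Proof. by rewrite dotDl dotNl. Qed.

Lemma dotDr u v w : dot v (u + w) = dot v u + dot v w.
Proof. by rewrite dotC dotDl !(dotC v). Qed.
Lemma dotZr (c : R) u v : dot v (c *: u) = c * dot v u.
Proof. by rewrite dotC dotZl dotC. Qed.
Lemma dotNr u v : dot v (- u) = - dot v u.
Proof. by rewrite dotC dotNl dotC. Qed.
Lemma dotBr u v w : dot v (u - w) = dot v u - dot v w.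
Proof. by rewrite dotDr dotNr. Qed.

Lemma dot_suml (I : Type) (r : seq I) (p : pred I) (F : I -> 'rV[R]_n) v :
  dot (\sum_(i <- r | p i) F i) v = \sum_(i <- r | p i) dot (F i) v.
Proof.
by apply: (big_morph (fun x => dot x v)); [move=> x y; rewrite dotDl | rewrite dot0l].
Qed.

Lemma dot_gt0 u : u != 0 -> 0 < dot u u.
Proof.
move=> nz; rewrite lt_def; apply/andP; split; last first.
  by rewrite dotE sumr_ge0 // => j _; rewrite -expr2 sqr_ge0.
apply: contra nz; rewrite dotE psumr_eq0; last by move=> j _; rewrite -expr2 sqr_ge0.
move/allP=> H; apply/eqP/matrixP => i j; rewrite !mxE (ord1 i).
have := H j (mem_index_enum j); rewrite /= mulf_eq0 orbb => /eqP -> //.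
Qed.


Lemma cartanDl u w b : cartan (u + w) b = cartan u b + cartan w b.
Proof. by rewrite /cartan dotDl mulrDr mulrDl. Qed.
Lemma cartanNl u b : cartan (- u) b = - cartan u b.
Proof. by rewrite /cartan dotNl mulrN mulNr. Qed.
Lemma cartanBl u w b : cartan (u - w) b = cartan u b - cartan w b.
Proof. by rewrite cartanDl cartanNl. Qed.
Lemma cartanZl (c : R) u b : cartan (c *: u) b = c * cartan u b.
Proof. by rewrite /cartan dotZl; rewrite !mulrA [2 * c]mulrC. Qed.
Lemma cartan_suml (I : Type) (r : seq I) (p : pred I) (F : I -> 'rV[R]_n) b :
  cartan (\sum_(i <- r | p i) F i) b = \sum_(i <- r | p i) cartan (F i) b.
Proof. by rewrite /cartan dot_suml mulr_sumr mulr_suml. Qed.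

Lemma cartan_self a : a != 0 -> cartan a a = 2.
Proof. by move=> /dot_gt0 /lt0r_neq0 h; rewrite /cartan mulfK. Qed.

Lemma refl_self a : a != 0 -> refl a a = - a.
Proof. by move=> h; rewrite /refl cartan_self // (_ : (2:R) = 1 + 1) // scalerDl scale1r opprD addrA subrr sub0r. Qed.

Lemma refl_invol a x : a != 0 -> refl a (refl a x) = x.
Proof.
move=> h; rewrite /refl cartanBl cartanZl cartan_self //.
have -> : cartan x a - cartan x a * 2 = - cartan x a by ring.
by rewrite scaleNr opprK subrK.
Qed.

Lemma cartan_refl (s g x : 'rV[R]_n) : g != 0 -> x != 0 ->
  cartan s (refl g x) = cartan s x - cartan s g * cartan g x.
Proof.
move=> /dot_gt0 /lt0r_neq0 hg /dot_gt0 /lt0r_neq0 hx.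
have ex : dot (refl g x) (refl g x) = dot x x.
  rewrite /refl /cartan !(dotBl, dotBr, dotZl, dotZr) (dotC g x).
  by field.
rewrite /cartan ex /refl dotBr dotZr /cartan (dotC g x); field.
by apply/andP.
Qed.


Lemma int_add x y : is_intR x -> is_intR y -> is_intR (x + y :> R).
Proof. by move=> [a ->] [b ->]; exists (a + b); rewrite intrD. Qed.
Lemma int_sum (I : Type) (r : seq I) (p : pred I) (F : I -> R) :
  (forall i, p i -> is_intR (F i)) -> is_intR (\sum_(i <- r | p i) F i).
Proof.
move=> h; apply: (big_ind (fun x => is_intR x)) => //; first by exists 0.
exact: int_add.
Qed.
Lemma even_sub x y : is_evenR x -> is_evenR y -> is_evenR (x - y :> R).
Proof. by move=> [a ->] [b ->]; exists (a - b); rewrite intrB mulrBr. Qed.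
Lemma even_mul x y : is_evenR x -> is_intR y -> is_evenR (x * y :> R).
Proof. by move=> [a ->] [b ->]; exists (a * b); rewrite intrM mulrA. Qed.
Lemma even_opp x : is_evenR x -> is_evenR (- x :> R).
Proof. by move=> [a ->]; exists (- a); rewrite intrN mulrN. Qed.
Lemma even0 : is_evenR (0 : R).
Proof. by exists 0; rewrite mulr0. Qed.

Lemma root_neq0 rs a : root_system rs -> a \in rs -> a != 0.
Proof. by case=> [[_ h0]] _ _ _ _ ha; apply: contraNneq h0 => <-. Qed.

Lemma rootN rs a : root_system rs -> a \in rs -> - a \in rs.
Proof.
move=> hr ha; rewrite -refl_self; last exact: root_neq0 hr ha.
by case: hr => _ _ h _ _; apply: h.
Qed.

Lemma coef_uniq P (x y : 'I_(size P) -> R) : free P ->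
  \sum_(i < size P) x i *: P`_i = \sum_(i < size P) y i *: P`_i ->
  forall i, x i = y i.
Proof.
move=> hf e i; have /(@freeP _ _ _ (in_tuple P)) h := hf.
move: (h (fun i => x i - y i)) => {}h.
apply/eqP; rewrite -subr_eq0; apply/eqP/h.
by under eq_bigr do rewrite scalerBl; rewrite sumrB e subrr.
Qed.

Lemma delta_sum P (j : 'I_(size P)) :
  P`_j = \sum_(i < size P) (i == j)%:R *: P`_i.
Proof.
rewrite (bigD1 j) //= eqxx scale1r big1 ?addr0 // => i /negbTE ->.
by rewrite scale0r.
Qed.

Lemma pos_excl rs P a : root_system rs -> is_base P rs -> a \in rs ->
  nonneg_comb P a -> nonneg_comb P (- a) -> False.
Proof.
move=> hr [_ hf _] ha [c ec] [d ed].
have e : \sum_(i < size P) ((c i)%:R + (d i)%:R) *: P`_i =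
         \sum_(i < size P) (0:R) *: P`_i.
  under eq_bigr do rewrite scalerDl.
  rewrite big_split /= -ec -ed subrr; under eq_bigr do rewrite scale0r.
  by rewrite big1.
have h0 : forall i, c i = 0%N.
  move=> i; have := coef_uniq hf e i; rewrite -natrD => /eqP.
  by rewrite pnatr_eq0 addn_eq0 => /andP [/eqP].
have := root_neq0 hr ha; rewrite ec big1 ?eqxx // => i _.
by rewrite h0 scale0r.
Qed.

Lemma posN rs P a : root_system rs -> is_base P rs -> a \in rs ->
  `[< nonneg_comb P (- a) >] = ~~ `[< nonneg_comb P a >].
Proof.
move=> hr hb ha; have [_ _ hc] := hb.
case: (hc a ha) => h.
  by rewrite (asboolT h) asboolF //= => h'; exact: (pos_excl hr hb ha h h').
rewrite (asboolT h) asboolF //= => h'; apply: (pos_excl hr hb ha h' h).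
Qed.

Lemma reflP rs P (j : 'I_(size P)) a (c : 'I_(size P) -> nat) :
  root_system rs -> is_base P rs -> a \in rs ->
  a = \sum_(i < size P) (c i)%:R *: P`_i -> a != P`_j ->
  exists c' : 'I_(size P) -> nat,
    refl P`_j a = \sum_(i < size P) (c' i)%:R *: P`_i /\
    forall i, (c' i)%:R = (c i)%:R - cartan a P`_j * (i == j)%:R.
Proof.
move=> hr hb ha ea hne; have [hsub hf hc] := hb.
set g := P`_j; set k := cartan a g.
have gr : g \in rs by apply: hsub; apply: mem_nth.
have hra : refl g a \in rs by case: hr => _ _ h _ _; apply: h.
have key : refl g a = \sum_(i < size P) ((c i)%:R - k * (i == j)%:R) *: P`_i.
  rewrite /refl -/k {1}ea /g (delta_sum j) scaler_sumr -sumrB.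
  by apply: eq_bigr => i _; rewrite scalerA scalerBl.
case: (hc _ hra) => [[c' ec'] | [d ed]].
  exists c'; split => //; apply: coef_uniq hf _; by rewrite -ec'.
exfalso.
have e : \sum_(i < size P) ((c i)%:R + (d i)%:R) *: P`_i =
         \sum_(i < size P) (k * (i == j)%:R) *: P`_i.
  under eq_bigr do rewrite scalerDl.
  rewrite big_split /= -ea -ed.
  under [RHS]eq_bigr do rewrite -scalerA.
  rewrite -scaler_sumr -delta_sum -/g /refl -/k.
  by rewrite opprB addrC subrK.
have h0 : forall i, i != j -> c i = 0%N.
  move=> i /negbTE hij; have := coef_uniq hf e i; rewrite hij mulr0 -natrD => /eqP.
  by rewrite pnatr_eq0 addn_eq0 => /andP [/eqP].
have ea' : a = (c j)%:R *: g.
  rewrite ea (bigD1 j) //= big1 ?addr0 // => i hij; by rewrite h0 // scale0r.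
have : (c j)%:R *: g \in rs by rewrite -ea'.
case: hr => _ _ _ _ /(_ g _ gr) h /h [] hcj.
  by move: hne; rewrite ea' hcj scale1r eqxx.
by have := ler0n R (c j); rewrite hcj; lra.
Qed.

Lemma pos_refl rs P (j : 'I_(size P)) a :
  root_system rs -> is_base P rs -> a \in rs ->
  nonneg_comb P a -> a != P`_j -> nonneg_comb P (refl P`_j a).
Proof.
move=> hr hb ha [c ec] hne; have [c' [e _]] := reflP hr hb ha ec hne.
by exists c'.
Qed.

Lemma cartanNr u b : cartan u (- b) = - cartan u b.
Proof. by rewrite /cartan dotNr dotNl dotNr opprK mulrN mulNr. Qed.

Lemma even_all rs P s : root_system rs -> is_base P rs ->
  (forall b, b \in P -> is_evenR (cartan s b)) ->
  forall a, a \in rs -> is_evenR (cartan s a).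
Proof.
move=> hr hb hP.
have [hsub hf hc] := hb.
have hint : forall x y, x \in rs -> y \in rs -> is_intR (cartan y x).
  by case: hr => _ _ _ hi _ x y hx hy; apply: hi.
have hrefl : forall x y, x \in rs -> y \in rs -> refl x y \in rs.
  by case: hr => _ _ h _ _ x y hx hy; apply: h.
have main : forall N a (c : 'I_(size P) -> nat), a \in rs ->
    a = \sum_(i < size P) (c i)%:R *: P`_i ->
    (\sum_(i < size P) c i < N)%N -> is_evenR (cartan s a).
  elim=> [//|N IH] a c ha ea hlt.
  case: (boolP (a \in P)) => [/hP //| haP].
  have haa : 0 < dot a a by apply: dot_gt0; exact: root_neq0 hr ha.
  have [j hj] : exists j, 0 < dot ((c j)%:R *: P`_j) a.
    case: (boolP [exists j, 0 < dot ((c j)%:R *: P`_j) a]) => [/existsP //|].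
    rewrite negb_exists => /forallP h.
    have : dot a a <= 0.
      rewrite {1}ea dot_suml; apply: sumr_le0 => i _; rewrite leNgt; exact: h.
    lra.
  set g := P`_j.
  have gr : g \in rs by apply: hsub; apply: mem_nth.
  have gnz := root_neq0 hr gr.
  have hd : 0 < dot a g.
    move: hj; rewrite dotZl dotC -/g; have := ler0n R (c j); nra.
  have hne : a != g by apply: contraNneq haP => ->; apply: mem_nth.
  have [c' [ea' hc']] := reflP hr hb ha ea hne.
  have hk : 0 < cartan a g.
    by rewrite /cartan; apply: divr_gt0; [lra | exact: dot_gt0].
  have [z ez] := hint g a gr ha.
  have hsum : ((\sum_(i < size P) c' i)%:R : R) =
              (\sum_(i < size P) c i)%:R - cartan a g.
    rewrite !natr_sum; under eq_bigr do rewrite hc'.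
    rewrite sumrB; congr (_ - _).
    rewrite (bigD1 j) //= eqxx mulr1 big1 ?addr0 // => i /negbTE ->.
    by rewrite mulr0.
  have hlt' : (\sum_(i < size P) c' i < N)%N.
    move: hsum; rewrite ez => hsum.
    have hz : (0 < z)%R by rewrite -(ltr0z R) -ez.
    have : ((\sum_(i < size P) c' i)%:Z + z)%:~R =
           ((\sum_(i < size P) c i)%:Z)%:~R :> R.
      rewrite intrD; change (((\sum_(i < size P) c' i)%N%:R : R) + z%:~R = (\sum_(i < size P) c i)%N%:R).
      by rewrite hsum subrK.
    move/intr_inj => e; lia.
  have ra : refl g a \in rs by apply: hrefl.
  have := IH _ _ ra ea' hlt' => hev.
  have -> : a = refl g (refl g a) by rewrite refl_invol.
  rewrite cartan_refl //; last exact: root_neq0 hr ra.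
  apply: even_sub => //; apply: even_mul; first by apply: hP; apply: mem_nth.
  exact: hint.
move=> a ha; case: (hc a ha) => [[c ec] | [c ec]].
  by apply: (main (\sum_(i < size P) c i).+1 a c).
have := main (\sum_(i < size P) c i).+1 (- a) c (rootN hr ha) ec (ltnSn _).
by rewrite cartanNr => /even_opp; rewrite opprK.
Qed.

Lemma reindex (V : zmodType) rs (f : 'rV[R]_n -> 'rV[R]_n) (p : pred 'rV[R]_n)
  (F : 'rV[R]_n -> V) : uniq rs -> (forall a, a \in rs -> f a \in rs) ->
  (forall a, a \in rs -> f (f a) = a) ->
  \sum_(a <- rs | p a) F a = \sum_(a <- rs | p (f a)) F (f a).
Proof.
move=> hu hin hinv; rewrite -(big_map f p F); apply: perm_big; apply: uniq_perm => //.
  rewrite map_inj_in_uniq // => x y hx hy e.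
  by rewrite -(hinv x hx) e hinv.
move=> x; apply/idP/idP => [hx | /mapP [y hy ->]]; last exact: hin.
by apply/mapP; exists (f x); [exact: hin | rewrite hinv].
Qed.

Lemma memP_idx P (b : 'rV[R]_n) : b \in P -> exists j : 'I_(size P), b = P`_j.
Proof. move=> hb; have hi : (index b P < size P)%N by rewrite index_mem.
exists (Ordinal hi) => /=; by rewrite nth_index. Qed.

Lemma reflN (g a : 'rV[R]_n) : refl g (- a) = - refl g a.
Proof. by rewrite /refl cartanNl scaleNr opprB opprK addrC. Qed.

Lemma memH_N rs ts a : root_system rs -> a \in rs ->
  (- a \in rootsH rs ts) = (a \in rootsH rs ts).
Proof.
move=> hr ha; rewrite !mem_filter ha (rootN hr ha) !andbT.
by apply: eq_all => t; rewrite dotNl oppr_eq0.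
Qed.

Lemma memH_refl rs ts g a : root_system rs -> g \in rootsH rs ts -> a \in rs ->
  (refl g a \in rootsH rs ts) = (a \in rootsH rs ts).
Proof.
move=> hr; rewrite mem_filter => /andP [/allP hg gr] ha.
have hra : refl g a \in rs by case: hr => _ _ h _ _; apply: h.
rewrite !mem_filter ha hra !andbT; apply: eq_in_all => t ht /=.
by rewrite /refl dotBl dotZl (eqP (hg t ht)) mulr0 subr0.
Qed.

Lemma cartan_koszul_H rs ts P g : root_system rs -> is_base P rs ->
  g \in P -> g \in rootsH rs ts -> cartan (koszul_form rs ts P) g = 0.
Proof.
move=> hr hb gP gH; have [hsub hf hc] := hb.
have gr : g \in rs by apply: hsub.
have gnz := root_neq0 hr gr.
have [j ej] := memP_idx gP.
have hu : uniq rs by case: hr => [[]].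
have hin : forall a, a \in rs -> refl g a \in rs.
  by case: hr => _ _ h _ _ a ha; apply: h.
have hQ : forall a, a \in rs ->
  `[< nonneg_comb P (refl g a) >] && (refl g a \notin rootsH rs ts) =
  `[< nonneg_comb P a >] && (a \notin rootsH rs ts).
  move=> a ha; rewrite (memH_refl hr gH ha).
  case: (boolP (a \in rootsH rs ts)) => haH; first by rewrite !andbF.
  rewrite !andbT.
  have hag : a != g by apply: contraNneq haH => ->.
  have hang : - a != g.
    apply: contraNneq haH => e; rewrite -(memH_N ts hr ha) e //.
  case: (boolP `[< nonneg_comb P a >]) => [/asboolP hp | hn].
    apply/asboolP; rewrite ej; apply: pos_refl hr hb ha hp _; by rewrite -ej.
  have hpn : nonneg_comb P (- a) by apply/asboolP; rewrite (posN hr hb ha).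
  have : nonneg_comb P (refl g (- a)).
    rewrite ej; apply: pos_refl hr hb (rootN hr ha) hpn _; by rewrite -ej.
  rewrite reflN => /asboolP; rewrite (posN hr hb (hin a ha)).
  by move/negbTE.
set Q := fun a => `[< nonneg_comb P a >] && (a \notin rootsH rs ts).
have e : koszul_form rs ts P = refl g (koszul_form rs ts P).
  rewrite /koszul_form -/Q.
  rewrite [LHS](@reindex _ rs (refl g) Q id hu hin (fun a _ => refl_invol a gnz)).
  have -> : \sum_(a <- rs | Q (refl g a)) refl g a = \sum_(a <- rs | Q a) refl g a.
    rewrite big_seq_cond [RHS]big_seq_cond; apply: eq_bigl => a.
    by case: (boolP (a \in rs)) => ha //=; rewrite /Q hQ.
  rewrite {2}/refl cartan_suml scaler_suml -sumrB.
  by apply: eq_bigr.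
set sg := koszul_form rs ts P.
have := congr1 (fun x => sg - x) e; rewrite /= subrr /refl opprB addrC subrK => /esym /eqP.
by rewrite scaler_eq0 (negbTE gnz) orbF => /eqP.
Qed.

Lemma koszul_diff_even rs ts P P' b : root_system rs -> is_base P rs ->
  is_base P' rs -> b \in rs ->
  is_evenR (cartan (koszul_form rs ts P) b - cartan (koszul_form rs ts P') b).
Proof.
move=> hr hb hb' hbr.
have hu : uniq rs by case: hr => [[]].
have hint : forall x, x \in rs -> is_intR (cartan x b).
  by case: hr => _ _ _ hi _ x hx; apply: hi.
rewrite /koszul_form !cartan_suml.
rewrite (bigID (fun a => `[< nonneg_comb P' a >]))
        [X in _ - X](bigID (fun a => `[< nonneg_comb P a >])) /=.
set Y := \sum_(i <- rs | (`[< nonneg_comb P i >] && (i \notin rootsH rs ts)) &&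
            ~~ `[< nonneg_comb P' i >]) cartan i b.
have eX : \sum_(i <- rs | (`[< nonneg_comb P i >] && (i \notin rootsH rs ts)) &&
            `[< nonneg_comb P' i >]) cartan i b =
          \sum_(i <- rs | (`[< nonneg_comb P' i >] && (i \notin rootsH rs ts)) &&
            `[< nonneg_comb P i >]) cartan i b.
  apply: eq_bigl => a.
  by case: `[< nonneg_comb P a >]; case: `[< nonneg_comb P' a >];
     case: (a \in rootsH rs ts).
have eZ : \sum_(i <- rs | (`[< nonneg_comb P' i >] && (i \notin rootsH rs ts)) &&
            ~~ `[< nonneg_comb P i >]) cartan i b = - Y.
  rewrite (@reindex _ rs -%R _ _ hu (fun a ha => rootN hr ha) (fun a _ => opprK a)).
  rewrite /Y big_seq_cond [in RHS]big_seq_cond -sumrN.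
  apply: eq_big => a.
    case: (boolP (a \in rs)) => ha //=.
    rewrite (posN hr hb ha) (posN hr hb' ha) (memH_N ts hr ha).
    by case: `[< nonneg_comb P a >]; case: `[< nonneg_comb P' a >];
       case: (a \in rootsH rs ts).
  by move=> _; rewrite cartanNl.
rewrite eX eZ opprD opprK.
have -> : forall x y : R, x + y + (- x + y) = y + y by move=> x y; ring.
have [z ez] : is_intR Y.
  by rewrite /Y big_seq_cond; apply: int_sum => a /andP [ha _]; apply: hint.
by exists z; rewrite ez; ring.
Qed.

Lemma one_dir rs ts P P' : root_system rs -> is_base P rs -> is_base P' rs ->
  all_koszul_even rs ts P -> all_koszul_even rs ts P'.
Proof.
move=> hr hb hb' hev b bP' bH.
have [hsub' _ _] := hb'; have [hsub _ _] := hb.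
have br : b \in rs by apply: hsub'.
have step1 : forall g, g \in P -> is_evenR (cartan (koszul_form rs ts P) g).
  move=> g gP; case: (boolP (g \in rootsH rs ts)) => gH.
    by rewrite (cartan_koszul_H hr hb gP gH); exact: even0.
  exact: hev.
have h2 := even_all hr hb step1 br.
have h3 := koszul_diff_even ts hr hb hb' br.
rewrite /koszul_number.
have -> : cartan (koszul_form rs ts P') b =
  cartan (koszul_form rs ts P) b -
  (cartan (koszul_form rs ts P) b - cartan (koszul_form rs ts P') b).
  by rewrite opprB addrC subrK.
exact: even_sub.
Qed.

End Aux.

Theorem mainTheorem16 (R : realType) (n : nat) (rs ts P P' : seq 'rV[R]_n) :
  root_system rs ->
  inv_cx_structure rs ts P ->
  inv_cx_structure rs ts P' ->
  (all_koszul_even rs ts P <-> all_koszul_even rs ts P').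
Proof.
move=> hr [hb _] [hb' _]; split; exact: one_dir.
Qed.
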